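(* Fix integers $d\ge1$, $k\ge2$ and $1\le t\le k-1$. Let $E$ be a set of $l$ unordered pairs $\{i,j\}$ of distinct indices in $\{1,\dots,k\}$ (so $l\le\binom{k}{2}$) such that every index $i$ lies in at most $t$ pairs of $E$. For every $\varepsilon>0$ there is a constant $C=C(\varepsilon,d,k)>0$ such that the following holds. Let $q$ be a prime power, $B$ a non-degenerate bilinear form on $\mathbb{F}_q^d$, and $\mathcal{A}_1,\dots,\mathcal{A}_k\subseteq\mathbb{F}_q^d$ with $|\mathcal{A}_i|\ge C\,q^{\frac{d-1}{2}+t}$ for all $i$. Then for any choice of $\lambda_{ij}\in\mathbb{F}_q^*$, $\{i,j\}\in E$, the number $S$ of tuples $(\mathbf{a}_1,\dots,\mathbf{a}_k)\in\mathcal{A}_1\times\cdots\times\mathcal{A}_k$ satisfying the system \[ B(\mathbf{a}_i,\mathbf{a}_j)=\lambda_{ij}\quad\text{for all }\{i,j\}\in E \] satisfies $\big|S-q^{-l}\prod_{i=1}^k|\mathcal{A}_i|\big|\le \varepsilon\, q^{-l}\prod_{i=1}^k|\mathcal{A}_i|$. (In asymptotic notation: if $|\mathcal{A}_i|\gg q^{\frac{d-1}{2}+t}$ then the system has $(1+o(1))q^{-l}\prod_i|\mathcal{A}_i|$ solutions.)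
   Context: $B:\mathbb{F}_q^d\times\mathbb{F}_q^d\to\mathbb{F}_q$ is bilinear and non-degenerate; for each pair $\{i,j\}\in E$ the equation is written with the index order $(i,j)$ fixed once and for all. $\mathbb{F}_q^*=\mathbb{F}_q\setminus\{0\}$. *)

(* Defs.v *)
From HB Require Import structures.
From mathcomp Require Import all_boot all_order all_algebra.
From Stdlib Require Import Reals.
Set Implicit Arguments. Unset Strict Implicit. Unset Printing Implicit Defensive.
Import GRing.Theory.

Local Open Scope ring_scope.

Definition is_bilinear_form (F : fieldType) (d : nat)
    (B : 'rV[F]_d -> 'rV[F]_d -> F) : Prop :=
  (forall (a : F) (x y z : 'rV[F]_d), B (a *: x + y) z = a * B x z + B y z) /\
  (forall (a : F) (x y z : 'rV[F]_d), B x (a *: y + z) = a * B x y + B x z).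

Definition is_nondegenerate (F : fieldType) (d : nat)
    (B : 'rV[F]_d -> 'rV[F]_d -> F) : Prop :=
  (forall x, (forall y, B x y = 0) -> x = 0) /\
  (forall y, (forall x, B x y = 0) -> y = 0).

(* E : a set of pairs of distinct indices, each unordered pair {i,j} listed once,
   with an orientation (i,j) fixed once and for all. *)
Definition valid_edges (k : nat) (E : {set 'I_k * 'I_k}) : Prop :=
  forall e, e \in E -> e.1 != e.2 /\ (e.2, e.1) \notin E.

Definition edge_deg (k : nat) (E : {set 'I_k * 'I_k}) (i : 'I_k) : nat :=
  #|[set e in E | (e.1 == i) || (e.2 == i)]|.

Definition num_solutions (F : finFieldType) (d k : nat)
    (B : 'rV[F]_d -> 'rV[F]_d -> F) (E : {set 'I_k * 'I_k})
    (lam : 'I_k * 'I_k -> F) (A : 'I_k -> {set 'rV[F]_d}) : nat :=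
  #|[set a : {ffun 'I_k -> 'rV[F]_d} |
      [forall i, a i \in A i] && [forall e in E, B (a e.1) (a e.2) == lam e]]|.

(* Main.v *)
Require Import Defs.
From HB Require Import structures.
From mathcomp Require Import all_boot all_order all_algebra.
From Stdlib Require Import Reals.
From Stdlib Require Import Lra Psatz.
Delimit Scope nat_scope with N.
Delimit Scope ring_scope with ring.
Import GRing.Theory.
Set Implicit Arguments. Unset Strict Implicit. Unset Printing Implicit Defensive.


Lemma Rplus_assoc' : associative Rplus. Proof. by move=> x y z; rewrite Rplus_assoc. Qed.
HB.instance Definition _ := Monoid.isComLaw.Build R 0%R Rplus Rplus_assoc' Rplus_comm Rplus_0_l.

Section PartA0.
Local Open Scope R_scope.
Definition ind (b : bool) : R := if b then 1 else 0.

Lemma ind_ge0 b : 0 <= ind b. Proof. case: b => /=; lra. Qed.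
Lemma ind_le1 b : ind b <= 1. Proof. case: b => /=; lra. Qed.
Lemma ind_sq b : ind b * ind b = ind b. Proof. case: b => /=; lra. Qed.
Lemma ind_and a b : ind (a && b) = ind a * ind b. Proof. case: a; case: b => /=; lra. Qed.

Section Sums.
Variable I : finType.

Lemma rsum_distrl (P : pred I) (F : I -> R) c :
  (\big[Rplus/0]_(i | P i) F i) * c = \big[Rplus/0]_(i | P i) (F i * c).
Proof.
apply: (big_morph (fun x => x * c)) => [x y|]; first by rewrite Rmult_plus_distr_r.
by rewrite Rmult_0_l.
Qed.

Lemma rsum_distrr (P : pred I) (F : I -> R) c :
  c * (\big[Rplus/0]_(i | P i) F i) = \big[Rplus/0]_(i | P i) (c * F i).
Proof.
rewrite Rmult_comm rsum_distrl; apply: eq_bigr => i _; apply: Rmult_comm.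
Qed.

Lemma rsum_le (P : pred I) (F G : I -> R) :
  (forall i, P i -> F i <= G i) ->
  \big[Rplus/0]_(i | P i) F i <= \big[Rplus/0]_(i | P i) G i.
Proof.
move=> H; apply: (big_ind2 (fun x y => x <= y)) => //; first lra.
by move=> *; apply: Rplus_le_compat.
Qed.

Lemma rsum_ge0 (P : pred I) (F : I -> R) :
  (forall i, P i -> 0 <= F i) -> 0 <= \big[Rplus/0]_(i | P i) F i.
Proof.
move=> H; apply: (big_ind (fun x => 0 <= x)) => //; first lra.
by move=> *; apply: Rplus_le_le_0_compat.
Qed.

Lemma INR_sum (P : pred I) (F : I -> nat) :
  INR (\sum_(i | P i) F i) = \big[Rplus/0]_(i | P i) INR (F i).
Proof.
by apply: (big_morph INR) => // x y; rewrite plus_INR.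
Qed.

Lemma rsum_ind (P : pred I) :
  \big[Rplus/0]_i ind (P i) = INR #|P|.
Proof.
rewrite -sum1_card INR_sum (big_mkcond P) /=; apply: eq_bigr => i _.
by rewrite /ind; case: (P i).
Qed.

Lemma rsum_sq (F : I -> R) :
  (\big[Rplus/0]_i F i) * (\big[Rplus/0]_i F i) =
  \big[Rplus/0]_i \big[Rplus/0]_j (F i * F j).
Proof.
rewrite rsum_distrl; apply: eq_bigr => i _; by rewrite rsum_distrr.
Qed.

Lemma rsum_pred1 (F : I -> R) (x : I) :
  \big[Rplus/0]_i (ind (i == x) * F i) = F x.
Proof.
rewrite (bigD1 x) //= eqxx big1 /=; first lra.
by move=> i /negbTE ->; rewrite /ind /=; lra.
Qed.

Lemma cs_step w x S n Q : 0 <= w -> 0 <= n -> 0 <= Q -> S ^ 2 <= n * Q ->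
  (w * x + S) ^ 2 <= (w + n) * (w * x ^ 2 + Q).
Proof.
move=> w0 n0 Q0 H.
have key : 2 * x * S <= Q + n * x ^ 2.
  case: (Req_dec n 0) => [n00|nne].
    rewrite n00 in H *.
    have := pow2_ge_0 S => ?; have -> : S = 0 by nra. nra.
  have np : 0 < n by lra.
  have h : n * (Q + n * x ^ 2 - 2 * x * S) >= 0.
    have := pow2_ge_0 (n * x - S); nra.
  have: 0 <= Q + n * x ^ 2 - 2 * x * S.
    apply: (Rmult_le_reg_l n) => //; lra.
  lra.
nra.
Qed.

Lemma cs_seq (s : seq I) (w g : I -> R) :
  (forall i, 0 <= w i) ->
  (\big[Rplus/0]_(i <- s) (w i * g i)) ^ 2 <=
  (\big[Rplus/0]_(i <- s) w i) * \big[Rplus/0]_(i <- s) (w i * g i ^ 2).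
Proof.
move=> Hw; elim: s => [|x s IH]; first by rewrite !big_nil /=; lra.
rewrite !big_cons; apply: cs_step => //.
- by elim: s {IH} => [|y s IH]; rewrite ?big_nil ?big_cons; [lra| have := Hw y; lra].
- by elim: s {IH} => [|y s IH]; rewrite ?big_nil ?big_cons; [lra| have := Hw y; have := pow2_ge_0 (g y); nra].
Qed.

Lemma cs_fin (w g : I -> R) :
  (forall i, 0 <= w i) ->
  (\big[Rplus/0]_i (w i * g i)) ^ 2 <=
  (\big[Rplus/0]_i w i) * \big[Rplus/0]_i (w i * g i ^ 2).
Proof. move=> Hw; rewrite /index_enum; exact: cs_seq. Qed.

End Sums.

End PartA0.

Section PartB.
Local Open Scope ring_scope.

Lemma fiber_card (V W : finType) (add : V -> V -> V) (g : V -> W) (w0 : W) :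
  (forall t, injective (add ^~ t)) ->
  (forall w w', exists t, forall y, (g (add y t) == w') = (g y == w)) ->
  #|V| = (#|W| * #|[set y | g y == w0]|)%N.
Proof.
move=> inj H.
have -> : #|V| = (\sum_(y : V) 1)%N by rewrite sum1_card.
rewrite (partition_big g predT) //=.
have -> : #|W| = #|[pred j : W | predT j]| by apply: eq_card.
rewrite -sum_nat_const; apply: eq_bigr => w _.
have [t Ht] := H w0 w.
rewrite sum1_card.
have -> : #|[pred i | predT i && (g i == w)]| = #|[set y | g y == w]|.
  by apply: eq_card => y; rewrite !inE.
rewrite -(card_preimset _ (inj t)); apply: eq_card => y.
by rewrite !inE Ht.
Qed.

Section Bil.
Variables (F : finFieldType) (d : nat) (B : 'rV[F]_d -> 'rV[F]_d -> F).
Hypothesis bil : is_bilinear_form B.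
Hypothesis nd : is_nondegenerate B.

Lemma B0l y : B 0 y = 0.
Proof.
have := bil.1 1 0 0 y; rewrite scale1r addr0 mul1r => h.
have h' : B 0 y + 0 = B 0 y + B 0 y by rewrite addr0.
by rewrite (addrI _ h').
Qed.

Lemma B0r x : B x 0 = 0.
Proof.
have := bil.2 1 x 0 0; rewrite scale1r addr0 mul1r => h.
have h' : B x 0 + 0 = B x 0 + B x 0 by rewrite addr0.
by rewrite (addrI _ h').
Qed.

Lemma BlinZ a x y : B (a *: x) y = a * B x y.
Proof. by have := bil.1 a x 0 y; rewrite addr0 B0l addr0. Qed.

Lemma BrinZ a x y : B x (a *: y) = a * B x y.
Proof. by have := bil.2 a x y 0; rewrite addr0 B0r addr0. Qed.

Lemma BlinD x x' y : B (x + x') y = B x y + B x' y.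
Proof. by have := bil.1 1 x x' y; rewrite scale1r mul1r. Qed.

Lemma BrinD x y y' : B x (y + y') = B x y + B x y'.
Proof. by have := bil.2 1 x y y'; rewrite scale1r mul1r. Qed.

Lemma exists_one x : x != 0 -> exists y, B x y = 1.
Proof.
move=> nx.
have [y Hy] : exists y, B x y != 0.
  apply/existsP; apply: contraT; rewrite negb_exists => /forallP H.
  suff : x = 0 by move/eqP; rewrite (negbTE nx).
  by apply: nd.1 => y; move: (H y); rewrite negbK => /eqP.
by exists ((B x y)^-1 *: y); rewrite BrinZ mulVf.
Qed.

Lemma fiber1 x lam : x != 0 ->
  #|'rV[F]_d| = (#|F| * #|[set y | B x y == lam]|)%N.
Proof.
move=> nx; have [y0 Hy0] := exists_one nx.
apply: (fiber_card (add := +%R)) => [t|w w']; first exact: addIr.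
exists ((w' - w) *: y0) => y.
rewrite BrinD BrinZ Hy0 mulr1.
by rewrite addrA subr_eq [w' + w]addrC (inj_eq (addIr w')).
Qed.

Lemma ker_sub u v : v != 0 -> (forall y, B v y = 0 -> B u y = 0) ->
  exists c, u = c *: v.
Proof.
move=> nv H; have [y0 Hy0] := exists_one nv.
exists (B u y0); apply/eqP; rewrite -subr_eq0; apply/eqP; apply: nd.1 => y.
have h := H ((- B v y) *: y0 + y).
rewrite BrinD BrinZ Hy0 mulr1 addNr BrinD BrinZ in h.
have {}h := h erefl.
rewrite BlinD -scaleNr BlinZ.
by rewrite mulNr addrC mulrC; move: h; rewrite mulNr addrC.
Qed.

Lemma sep_vec x x' : x != 0 -> x' != 0 -> ~~ [exists a, x' == a *: x] ->
  exists y, B x y = 1 /\ B x' y = 0.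
Proof.
move=> nx nx' nm.
have [y Hy] : exists y, (B x' y == 0) && (B x y != 0).
  apply/existsP; apply: contraT; rewrite negb_exists => /forallP H.
  have [c Hc] : exists c, x = c *: x'.
    apply: ker_sub => // y h; move: (H y); rewrite h eqxx /= negbK; by move/eqP.
  have c0 : c != 0 by apply: contraNneq nx => c0; rewrite Hc c0 scale0r.
  move: nm; rewrite negb_exists => /forallP /(_ c^-1); rewrite Hc scalerA mulVf //.
  by rewrite scale1r eqxx.
move/andP: Hy => [/eqP h1 h2].
by exists ((B x y)^-1 *: y); rewrite !BrinZ mulVf // h1 mulr0.
Qed.

Lemma fiber2 x x' lam : x != 0 -> x' != 0 -> ~~ [exists a, x' == a *: x] ->
  #|'rV[F]_d| = (#|F| * #|F| * #|[set y | (B x y == lam) && (B x' y == lam)]|)%N.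
Proof.
move=> nx nx' nm.
have [y1 [h11 h12]] := sep_vec nx nx' nm.
have nm' : ~~ [exists a, x == a *: x'].
  rewrite negb_exists; apply/forallP => a; apply/negP => /eqP e.
  have a0 : a != 0 by apply: contraNneq nx => a0; rewrite e a0 scale0r.
  move: nm; rewrite negb_exists => /forallP /(_ a^-1); rewrite e scalerA mulVf //.
  by rewrite scale1r eqxx.
have [y2 [h22 h21]] := sep_vec nx' nx nm'.
rewrite -card_prod.
have -> : #|[set y | (B x y == lam) && (B x' y == lam)]| =
          #|[set y | (B x y, B x' y) == (lam, lam)]| by apply: eq_card => y; rewrite !inE.
apply: (fiber_card (add := +%R)) => [t|w w']; first exact: addIr.
exists ((w'.1 - w.1) *: y1 + (w'.2 - w.2) *: y2) => y.
case: w w' => a b [a' b'] /=.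
rewrite !xpair_eqE !BrinD !BrinZ h11 h12 h21 h22 !mulr1 !mulr0 addr0 add0r.
congr andb.
  by rewrite addrA subr_eq [a' + a]addrC (inj_eq (addIr a')).
by rewrite addrA subr_eq [b' + b]addrC (inj_eq (addIr b')).
Qed.

Lemma multiple_disj x a y lam : lam != 0 -> a != 1 -> B x y == lam -> B (a *: x) y != lam.
Proof.
move=> nl na /eqP h; rewrite BlinZ h.
apply: contra na => /eqP h'.
by rewrite -(mulfK nl a) h' mulfV.
Qed.

End Bil.

End PartB.

Section PartC.
Local Open Scope R_scope.

Lemma rsum_const (I : finType) (K : R) : \big[Rplus/0]_(c : I) K = INR #|I| * K.
Proof.
rewrite big_const; elim: #|I| => [|n IH] /=; first lra.
rewrite IH; case: n {IH} => [|n] /=; lra.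
Qed.

Section Upd.
Variables (V : finZmodType) (k : nat).
Definition upd (a : {ffun 'I_k -> V}) (i : 'I_k) (x : V) : {ffun 'I_k -> V} :=
  [ffun r => if r == i then x else a r].

Lemma updE a i x r : upd a i x r = if r == i then x else a r.
Proof. by rewrite ffunE. Qed.

Lemma upd_same a i x : upd a i x i = x.
Proof. by rewrite updE eqxx. Qed.

Lemma upd_other a i x r : r != i -> upd a i x r = a r.
Proof. by rewrite updE => /negbTE ->. Qed.

Lemma upd_upd a i x y : upd (upd a i x) i y = upd a i y.
Proof. by apply/ffunP => r; rewrite !updE; case: (r == i). Qed.

Lemma upd_comm a i j x y : i != j -> upd (upd a i x) j y = upd (upd a j y) i x.
Proof.
move=> nij; apply/ffunP => r; rewrite !updE.
case: (r =P j) => [erj|nrj]; case: (r =P i) => [eri|nri] //.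
by move: nij; rewrite -eri -erj eqxx.
Qed.

Lemma average (G : {ffun 'I_k -> V} -> R) (i : 'I_k) :
  INR #|V| * \big[Rplus/0]_a G a = \big[Rplus/0]_a \big[Rplus/0]_(x : V) G (upd a i x).
Proof.
transitivity (\big[Rplus/0]_a \big[Rplus/0]_(c : V) G (upd a i (GRing.add (a i) c))); last first.
  apply: eq_bigr => a _.
  by rewrite [RHS](reindex_inj (addrI (a i))).
rewrite exchange_big /= -rsum_const; apply: eq_bigr => c _.
have inj : injective (fun a => upd a i (GRing.add (a i) c)).
  move=> a b /ffunP e; apply/ffunP => r.
  have := e r; rewrite !updE; case: (eqVneq r i) => [->|//].
  by move/addIr.
by rewrite [LHS](reindex_inj inj).
Qed.
End Upd.

End PartC.

Section PartD.
Local Open Scope R_scope.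

Section Var.
Variables (F : finFieldType) (d : nat) (B : 'rV[F]_d -> 'rV[F]_d -> F).
Hypothesis bil : is_bilinear_form B.
Hypothesis nd : is_nondegenerate B.
Variable lam : F.
Hypothesis nl : lam != 0%ring.

Let V := 'rV[F]_d.
Let q := INR #|F|.
Let Q := INR #|V|.
Let I x y := ind (B x y == lam).
Let c1 x := \big[Rplus/0]_(y : V) I x y.
Let c2 x x' := \big[Rplus/0]_(y : V) (I x y * I x' y).

Lemma q_ge1 : 1 <= q.
Proof.
rewrite /q; have : (leq 1 #|F|) by apply/card_gt0P; exists 0%ring.
by case: #|F| => // n _; rewrite S_INR; have := pos_INR n; lra.
Qed.

Lemma Q_ge0 : 0 <= Q.
Proof. exact: pos_INR. Qed.

Lemma c1_card x : c1 x = INR #|[set y | B x y == lam]|.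
Proof. by rewrite /c1 /I rsum_ind; congr INR; apply: eq_card => y; rewrite inE. Qed.

Lemma c1_nz x : x != 0%ring -> q * c1 x = Q.
Proof. by move=> nx; rewrite c1_card /q /Q (fiber1 bil nd lam nx) mult_INR. Qed.

Lemma I0 y : I 0%ring y = 0.
Proof. by rewrite /I (B0l bil) eq_sym (negbTE nl). Qed.

Lemma c1_0 : c1 0%ring = 0.
Proof. by rewrite /c1 big1 // => y _; rewrite I0. Qed.

Lemma c2_le_l x x' : c2 x x' <= c1 x.
Proof.
apply: rsum_le => y _; have := ind_ge0 (B x y == lam); have := ind_le1 (B x' y == lam).
rewrite /I; nra.
Qed.

Lemma c2_ge0 x x' : 0 <= c2 x x'.
Proof. apply: rsum_ge0 => y _; rewrite /I; have := ind_ge0 (B x y == lam); have := ind_ge0 (B x' y == lam); nra. Qed.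

Lemma c2_sym x x' : c2 x x' = c2 x' x.
Proof. by apply: eq_bigr => y _; rewrite Rmult_comm. Qed.

Lemma c2_diag x : c2 x x = c1 x.
Proof. by apply: eq_bigr => y _; rewrite ind_sq. Qed.

Lemma c2_indep x x' : x != 0%ring -> x' != 0%ring -> x != x' -> q * q * c2 x x' <= Q.
Proof.
move=> nx nx' nxx.
case: (boolP [exists a, x' == (a *: x)%ring]) => [/existsP [a /eqP ea]|nm].
  have a1 : a != 1%ring by apply: contraNneq nxx => a1; rewrite ea a1 scale1r.
  rewrite /c2 big1; first by have := Q_ge0; lra.
  move=> y _; rewrite /I; case: (eqVneq (B x y) lam) => h /=; last lra.
  by rewrite ea (negbTE (multiple_disj bil nl a1 (introT eqP h))) /=; lra.
have -> : c2 x x' = INR #|[set y | (B x y == lam) && (B x' y == lam)]|.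
  rewrite /c2 /I (eq_bigr (fun y => ind ((B x y == lam) && (B x' y == lam)))); last first.
    by move=> y _; rewrite ind_and.
  by rewrite rsum_ind; congr INR; apply: eq_card => y; rewrite inE.
by rewrite /q /Q (fiber2 bil nd lam nx nx' nm) !mult_INR; lra.
Qed.

Lemma phi_expand x x' :
  \big[Rplus/0]_(y : V) ((q * I x y - 1) * (q * I x' y - 1)) =
  q * q * c2 x x' - q * c1 x - q * c1 x' + Q.
Proof.
rewrite (eq_bigr (fun y => q * q * (I x y * I x' y) + (- q) * I x y + (- q) * I x' y + 1)); last first.
  by move=> y _; ring.
rewrite !big_split /= -!rsum_distrr rsum_const -/Q /c1 /c2. set s1 := \big[Rplus/0]_i (I x i * I x' i). set s2 := \big[Rplus/0]_i I x i. set s3 := \big[Rplus/0]_i I x' i. ring.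
Qed.

Lemma phi_le x x' :
  \big[Rplus/0]_(y : V) ((q * I x y - 1) * (q * I x' y - 1)) <= q * Q * ind (x == x').
Proof.
rewrite phi_expand.
have q1 := q_ge1; have Q0 := Q_ge0.
case: (eqVneq x 0%ring) => [->|nx].
  rewrite c1_0 /c2 big1; last by move=> y _; rewrite I0 Rmult_0_l.
  case: (eqVneq x' 0%ring) => [->|nx'].
    by rewrite c1_0 /=; nra.
  have := c1_nz nx'; rewrite /=; nra.
case: (eqVneq x' 0%ring) => [->|nx'].
  rewrite c1_0 c2_sym /c2 big1; last by move=> y _; rewrite I0 Rmult_0_l.
  have := c1_nz nx; rewrite (negbTE nx) /=; nra.
case: (eqVneq x x') => [<-|nxx].
  rewrite c2_diag /=.
  have := c1_nz nx; nra.
have := c2_indep nx nx' nxx; have := c1_nz nx; have := c1_nz nx'; rewrite /=; nra.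
Qed.

Lemma variance (p : pred V) :
  \big[Rplus/0]_(y : V) ((\big[Rplus/0]_(x : V) (ind (p x) * (q * I x y - 1))) ^ 2)
  <= q * Q * \big[Rplus/0]_(x : V) ind (p x).
Proof.
rewrite (eq_bigr (fun y => \big[Rplus/0]_(x : V) \big[Rplus/0]_(x' : V)
   ((ind (p x) * ind (p x')) * ((q * I x y - 1) * (q * I x' y - 1))))); last first.
  move=> y _; rewrite /= Rmult_1_r rsum_sq; apply: eq_bigr => x _; apply: eq_bigr => x' _; ring.
rewrite exchange_big /=.
rewrite (eq_bigr (fun x => \big[Rplus/0]_(x' : V) ((ind (p x) * ind (p x')) *
   \big[Rplus/0]_(y : V) ((q * I x y - 1) * (q * I x' y - 1))))); last first.
  by move=> x _; rewrite exchange_big /=; apply: eq_bigr => x' _; rewrite rsum_distrr.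
rewrite rsum_distrr; apply: rsum_le => x _.
apply: (Rle_trans _ (\big[Rplus/0]_(x' : V) (ind (x' == x) * (q * Q * ind (p x) * ind (p x'))))).
  apply: rsum_le => x' _.
  have h := phi_le x x'.
  have hp : 0 <= ind (p x) * ind (p x') by apply: Rmult_le_pos; apply: ind_ge0.
  apply: Rle_trans (Rmult_le_compat_l _ _ _ hp h) _.
  rewrite [x' == x]eq_sym; right; set u := ind (p x); set v := ind (p x'); set w := ind (x == x'); ring.
rewrite rsum_pred1 Rmult_assoc ind_sq; lra.
Qed.
End Var.

End PartD.

Section PartE.
Local Open Scope R_scope.

Lemma rsum_sub (I : finType) (f g : I -> R) :
  \big[Rplus/0]_i (f i - g i) = \big[Rplus/0]_i f i - \big[Rplus/0]_i g i.
Proof.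
rewrite (eq_bigr (fun i => f i + (-1) * g i)); last by move=> i _; ring.
by rewrite big_split /= -rsum_distrr; ring.
Qed.

Section Tuples.
Variables (F : finFieldType) (d k : nat) (B : 'rV[F]_d -> 'rV[F]_d -> F).
Variables (A : 'I_k -> {set 'rV[F]_d}) (lam : 'I_k * 'I_k -> F).

Definition Mem (J : pred 'I_k) (a : {ffun 'I_k -> 'rV[F]_d}) :=
  [forall r, J r ==> (a r \in A r)].
Definition Con (E : {set 'I_k * 'I_k}) (a : {ffun 'I_k -> 'rV[F]_d}) :=
  [forall f in E, B (a f.1) (a f.2) == lam f].
Definition touches (i : 'I_k) (f : 'I_k * 'I_k) := (f.1 == i) || (f.2 == i).

Lemma S_sum (E : {set 'I_k * 'I_k}) : INR (num_solutions B E lam A) =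
  \big[Rplus/0]_a ind (Mem predT a && Con E a).
Proof.
rewrite rsum_ind /num_solutions; congr INR; apply: eq_card => a.
by rewrite inE /Mem /Con; congr andb; apply: eq_forallb => r.
Qed.

Lemma Con_indep (E : {set 'I_k * 'I_k}) (i : 'I_k) (a : {ffun 'I_k -> 'rV[F]_d}) (x : 'rV[F]_d) : (forall f, f \in E -> ~~ touches i f) ->
  Con E (upd a i x) = Con E a.
Proof.
move=> H; apply: eq_forallb_in => f fE.
have := H f fE; rewrite /touches negb_or => /andP [h1 h2].
by rewrite !upd_other.
Qed.

Lemma Con_U (E1 E2 : {set 'I_k * 'I_k}) (a : {ffun 'I_k -> 'rV[F]_d}) : Con (E1 :|: E2) a = Con E1 a && Con E2 a.
Proof.
apply/forall_inP/andP => [H|[/forall_inP H1 /forall_inP H2] f].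
  by split; apply/forall_inP => f fE; apply: H; rewrite inE fE ?orbT.
by rewrite inE => /orP [] fE; [apply: H1 | apply: H2].
Qed.

Lemma Con_D1 (E : {set 'I_k * 'I_k}) e (a : {ffun 'I_k -> 'rV[F]_d}) : e \in E ->
  Con E a = Con (E :\ e) a && (B (a e.1) (a e.2) == lam e).
Proof.
move=> eE; apply/forall_inP/andP => [H|[/forall_inP H1 H2] f fE].
  split; last exact: H.
  by apply/forall_inP => f; rewrite inE => /andP [_ fE]; apply: H.
case: (eqVneq f e) => [->//|nfe]; apply: H1; by rewrite !inE nfe fE.
Qed.

Lemma Mem_indep (J : pred 'I_k) (i : 'I_k) (a : {ffun 'I_k -> 'rV[F]_d}) (x : 'rV[F]_d) : ~~ J i -> Mem J (upd a i x) = Mem J a.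
Proof.
move=> nJ; apply: eq_forallb => r; case: (eqVneq r i) => [->|nri].
  by rewrite (negbTE nJ).
by rewrite upd_other.
Qed.

Lemma Mem_split (i j : 'I_k) (a : {ffun 'I_k -> 'rV[F]_d}) : i != j ->
  Mem predT a = [&& Mem (fun r => (r != i) && (r != j)) a, a i \in A i & a j \in A j].
Proof.
move=> nij; apply/forallP/and3P => [H|[/forallP H1 H2 H3] r].
  split; last 2 first.
  - by have := H i.
  - by have := H j.
  by apply/forallP => r; apply/implyP => _; have := H r.
apply/implyP => _.
case: (eqVneq r i) => [->//|nri]; case: (eqVneq r j) => [->//|nrj].
by have := H1 r; rewrite nri nrj.
Qed.

End Tuples.

End PartE.

Section PartG.
Local Open Scope R_scope.

Section Key.
Variables (F : finFieldType) (d k : nat) (B : 'rV[F]_d -> 'rV[F]_d -> F).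
Hypothesis bil : is_bilinear_form B.
Hypothesis nd : is_nondegenerate B.
Variables (A : 'I_k -> {set 'rV[F]_d}) (lam : 'I_k * 'I_k -> F).
Variables (E' : {set 'I_k * 'I_k}) (e : 'I_k * 'I_k).
Hypothesis eE : e \in E'.
Hypothesis nij : e.1 != e.2.
Hypothesis nji : (e.2, e.1) \notin E'.
Hypothesis loopfree : forall f, f \in E' -> f.1 != f.2.
Hypothesis nl : lam e != 0%ring.

Let i := e.1.
Let j := e.2.
Let U := {ffun 'I_k -> 'rV[F]_d}.
Let E0 := [set f in E' | ~~ touches i f && ~~ touches j f].
Let Ei := [set f in E' :\ e | touches i f].
Let Ej := [set f in E' :\ e | touches j f].
Let E1 := [set f in E' | ~~ touches j f].
Let E2 := [set f in E' | ~~ touches i f].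

Lemma not_both f : f \in E' -> f != e -> touches i f -> ~~ touches j f.
Proof.
move=> fE nfe; rewrite /touches; case: f fE nfe => f1 f2 /= fE nfe.
have lf := loopfree fE; rewrite /= in lf.
case/orP => [/eqP e1|/eqP e2]; apply/negP; case/orP => [/eqP e1'|/eqP e2'].
- by move: nij; rewrite -/i -/j -e1 -e1' eqxx.
- move: nfe; rewrite e1 e2' /i /j; by case: (e) => ??; rewrite eqxx.
- move: nji; rewrite -/i -/j -e1' -e2 fE //.
- by move: nij; rewrite -/i -/j -e2 -e2' eqxx.
Qed.

Lemma not_both' f : f \in E' -> f != e -> touches j f -> ~~ touches i f.
Proof.
move=> fE nfe tj; apply/negP => ti; have := not_both fE nfe ti; by rewrite tj.
Qed.

Lemma Ei_noj f : f \in Ei -> ~~ touches j f.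
Proof. by rewrite !inE => /andP [/andP [nfe fE] ti]; apply: not_both. Qed.
Lemma Ej_noi f : f \in Ej -> ~~ touches i f.
Proof. by rewrite !inE => /andP [/andP [nfe fE] tj]; apply: not_both'. Qed.
Lemma E0_noi f : f \in E0 -> ~~ touches i f.
Proof. by rewrite !inE => /andP [_ /andP []]. Qed.
Lemma E0_noj f : f \in E0 -> ~~ touches j f.
Proof. by rewrite !inE => /andP [_ /andP []]. Qed.

Lemma te_i : touches i e. Proof. by rewrite /touches eqxx. Qed.
Lemma te_j : touches j e. Proof. by rewrite /touches eqxx orbT. Qed.

Lemma setD_eq : E' :\ e = E0 :|: Ei :|: Ej.
Proof.
apply/setP => f; rewrite !inE.
case: (eqVneq f e) => [->|nfe] /=; first by rewrite te_i te_j /= !andbF.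
case: (f \in E') => //=; by case: (touches i f); case: (touches j f).
Qed.

Lemma E1_eq : E1 = E0 :|: Ei.
Proof.
apply/setP => f; rewrite !inE.
case: (eqVneq f e) => [->|nfe] /=; first by rewrite te_i te_j eE.
case fE: (f \in E') => //=; case ti: (touches i f) => /=; rewrite ?andbF ?orbF ?orbT //.
by rewrite (not_both fE nfe ti).
Qed.

Lemma E2_eq : E2 = E0 :|: Ej.
Proof.
apply/setP => f; rewrite !inE.
case: (eqVneq f e) => [->|nfe] /=; first by rewrite te_i te_j eE.
case fE: (f \in E') => //=; case tj: (touches j f) => /=; rewrite ?andbF ?orbF ?orbT ?andbT //.
by rewrite (not_both' fE nfe tj).
Qed.

Let J0 := fun r : 'I_k => (r != i) && (r != j).
Let W0 (a : U) := Mem A J0 a && Con B lam E0 a.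
Let Xp (a : U) (x : 'rV[F]_d) := (x \in A i) && Con B lam Ei (upd a i x).
Let Wi (a : U) := [&& W0 a, a j \in A j & Con B lam Ej a].
Let T (a : U) := [&& W0 a, a i \in A i & Con B lam Ei a].
Let Sol (E : {set 'I_k * 'I_k}) (b : U) := Mem A predT b && Con B lam E b.

Lemma J0i : ~~ J0 i. Proof. by rewrite /J0 eqxx. Qed.
Lemma J0j : ~~ J0 j. Proof. by rewrite /J0 eqxx andbF. Qed.

Lemma W0_i a x : W0 (upd a i x) = W0 a.
Proof. by rewrite /W0 Mem_indep ?J0i // Con_indep //; exact: E0_noi. Qed.
Lemma W0_j a y : W0 (upd a j y) = W0 a.
Proof. by rewrite /W0 Mem_indep ?J0j // Con_indep //; exact: E0_noj. Qed.

Lemma Xp_j a y x : Xp (upd a j y) x = Xp a x.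
Proof.
by rewrite /Xp -upd_comm // Con_indep //; exact: Ei_noj.
Qed.

Lemma f1 a x : Sol (E' :\ e) (upd a i x) = Wi a && Xp a x.
Proof.
rewrite /Sol (Mem_split _ _ nij) setD_eq !Con_U -/i -/j -/J0.
rewrite Mem_indep ?J0i // upd_same upd_other 1?eq_sym //.
rewrite [Con B lam E0 _]Con_indep; last exact: E0_noi.
rewrite [Con B lam Ej _]Con_indep; last exact: Ej_noi.
rewrite /Wi /Xp /W0.
by case: (Mem A J0 a); case: (Con B lam E0 a); case: (x \in A i); case: (a j \in A j); case: (Con B lam Ei _); case: (Con B lam Ej a).
Qed.

Lemma f5 a x : T (upd a i x) = W0 a && Xp a x.
Proof. by rewrite /T W0_i upd_same /Xp. Qed.

Lemma f6 a y : T (upd a j y) = T a.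
Proof.
rewrite /T W0_j upd_other // Con_indep //; exact: Ei_noj.
Qed.

Lemma f9 a x : Wi (upd a i x) = Wi a.
Proof.
rewrite /Wi W0_i upd_other 1?eq_sym // Con_indep //; exact: Ej_noi.
Qed.

Lemma f7 b : Sol E1 b = T b && (b j \in A j).
Proof.
rewrite /Sol (Mem_split _ _ nij) E1_eq Con_U /T /W0 -/i -/j -/J0.
by case: (Mem A J0 b); case: (b i \in A i); case: (b j \in A j); case: (Con B lam E0 b); case: (Con B lam Ei b).
Qed.

Lemma f8 b : Sol E2 b = Wi b && (b i \in A i).
Proof.
rewrite /Sol (Mem_split _ _ nij) E2_eq Con_U /Wi /W0 -/i -/j -/J0.
by case: (Mem A J0 b); case: (b i \in A i); case: (b j \in A j); case: (Con B lam E0 b); case: (Con B lam Ej b).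
Qed.

Let q := INR #|F|.
Let Q := INR #|'rV[F]_d|.
Let Sx E := \big[Rplus/0]_(a : U) ind (Sol E a).

Lemma rsum_inset (S : {set 'rV[F]_d}) : \big[Rplus/0]_(y : 'rV[F]_d) ind (y \in S) = INR #|S|.
Proof. by rewrite rsum_ind; congr INR; apply: eq_card. Qed.

Lemma Q_gt0 : 0 < Q.
Proof. apply: lt_0_INR; apply/ltP; apply/card_gt0P; by exists 0%ring. Qed.

Let gg (a : U) := \big[Rplus/0]_(x : 'rV[F]_d) (ind (Xp a x) * (q * ind (B x (a j) == lam e) - 1)).

Lemma step1 : q * Sx E' - Sx (E' :\ e) =
  \big[Rplus/0]_(b : U) (ind (Sol (E' :\ e) b) * (q * ind (B (b i) (b j) == lam e) - 1)).
Proof.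
rewrite /Sx rsum_distrr -rsum_sub; apply: eq_bigr => b _.
have -> : Sol E' b = Sol (E' :\ e) b && (B (b i) (b j) == lam e).
  by rewrite /Sol (Con_D1 _ _ _ eE) andbA.
rewrite ind_and; set u := ind (Sol _ b); set w := ind (B _ _ == _); ring.
Qed.

Lemma step3 a : \big[Rplus/0]_(x : 'rV[F]_d)
   (ind (Sol (E' :\ e) (upd a i x)) * (q * ind (B (upd a i x i) (upd a i x j) == lam e) - 1))
  = ind (Wi a) * gg a.
Proof.
rewrite /gg rsum_distrr; apply: eq_bigr => x _.
rewrite f1 ind_and upd_same upd_other 1?eq_sym //.
set u := ind (Wi a); set v := ind (Xp a x); set w := ind _; ring.
Qed.

Lemma step6 a : \big[Rplus/0]_(y : 'rV[F]_d) (ind (W0 (upd a j y)) * gg (upd a j y) ^ 2)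
  = ind (W0 a) * \big[Rplus/0]_(y : 'rV[F]_d)
      (\big[Rplus/0]_(x : 'rV[F]_d) (ind (Xp a x) * (q * ind (B x y == lam e) - 1))) ^ 2.
Proof.
rewrite rsum_distrr; apply: eq_bigr => y _; rewrite W0_j; congr (_ * _ ^ 2).
by rewrite /gg; apply: eq_bigr => x _; rewrite Xp_j upd_same.
Qed.

Lemma step8 : \big[Rplus/0]_(a : U) (ind (W0 a) * \big[Rplus/0]_(x : 'rV[F]_d) ind (Xp a x))
   = Q * \big[Rplus/0]_(a : U) ind (T a).
Proof.
rewrite (average _ i); apply: eq_bigr => a _.
rewrite rsum_distrr; apply: eq_bigr => x _; by rewrite f5 ind_and.
Qed.

Lemma step9 : Q * Sx E1 = \big[Rplus/0]_(a : U) ind (T a) * INR #|A j|.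
Proof.
rewrite /Sx (average _ j) rsum_distrl; apply: eq_bigr => a _.
rewrite -rsum_inset rsum_distrr; apply: eq_bigr => y _.
by rewrite f7 f6 upd_same ind_and.
Qed.

Lemma step10 : Q * Sx E2 = \big[Rplus/0]_(a : U) ind (Wi a) * INR #|A i|.
Proof.
rewrite /Sx (average _ i) rsum_distrl; apply: eq_bigr => a _.
rewrite -rsum_inset rsum_distrr; apply: eq_bigr => x _.
by rewrite f8 f9 upd_same ind_and.
Qed.

Lemma key_ineq :
  INR #|A i| * INR #|A j| * (q * Sx E' - Sx (E' :\ e)) ^ 2 <= q * Q * Sx E1 * Sx E2.
Proof.
have Q0 := Q_gt0.
have q0 : 0 <= q by apply: pos_INR.
set D := q * Sx E' - Sx (E' :\ e).
set sW := \big[Rplus/0]_(a : U) ind (Wi a).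
set Z := \big[Rplus/0]_(a : U) (ind (W0 a) * gg a ^ 2).
set Xs := \big[Rplus/0]_(a : U) (ind (W0 a) * \big[Rplus/0]_(x : 'rV[F]_d) ind (Xp a x)).
set Tt := \big[Rplus/0]_(a : U) ind (T a).
have hD : Q * D = \big[Rplus/0]_(a : U) (ind (Wi a) * gg a).
  rewrite /D step1 (average _ i); apply: eq_bigr => a _; exact: step3.
have hCS : (Q * D) ^ 2 <= sW * \big[Rplus/0]_(a : U) (ind (Wi a) * gg a ^ 2).
  rewrite hD; apply: cs_fin => a; exact: ind_ge0.
have h5 : \big[Rplus/0]_(a : U) (ind (Wi a) * gg a ^ 2) <= Z.
  apply: rsum_le => a _.
  have : ind (Wi a) <= ind (W0 a).
    by rewrite /Wi; case: (W0 a) => /=; [apply: ind_le1 | lra].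
  have := pow2_ge_0 (gg a); nra.
have h6 : Q * Z <= q * Q * Xs.
  rewrite /Z (average _ j) /Xs rsum_distrr.
  apply: rsum_le => a _; rewrite step6.
  have := variance bil nd (nl) (Xp a).
  have := ind_ge0 (W0 a).
  set L := \big[Rplus/0]_(y : 'rV[F]_d) _.
  set R' := \big[Rplus/0]_(x : 'rV[F]_d) _.
  rewrite -/q -/Q. nra.
have hX := step8; rewrite -/Xs -/Tt in hX.
have h9 : Q * Sx E1 = Tt * INR #|A j| by rewrite step9 /Tt rsum_distrl.
have h10 : Q * Sx E2 = sW * INR #|A i| by rewrite step10 /sW rsum_distrl.
have sW0 : 0 <= sW by apply: rsum_ge0 => a _; exact: ind_ge0.
have Z0 : 0 <= Z by apply: rsum_ge0 => a _; have := ind_ge0 (W0 a); have := pow2_ge_0 (gg a); nra.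
have Ai0 : 0 <= INR #|A i| by apply: pos_INR.
have Aj0 : 0 <= INR #|A j| by apply: pos_INR.
have main : Q * Q * Q * (INR #|A i| * INR #|A j| * D ^ 2) <= Q * Q * Q * (q * Q * Sx E1 * Sx E2).
  have e1 : Q * Q * Q * (INR #|A i| * INR #|A j| * D ^ 2) = Q * (INR #|A i| * INR #|A j|) * (Q * D) ^ 2 by ring.
  have e2 : Q * Q * Q * (q * Q * Sx E1 * Sx E2) = q * Q * (INR #|A i| * sW) * (INR #|A j| * (Q * Tt)).
    have -> : Q * Q * Q * (q * Q * Sx E1 * Sx E2) = q * Q * Q * (Q * Sx E1) * (Q * Sx E2) by ring.
    rewrite h9 h10; ring.
  rewrite e1 e2.
  have hA : 0 <= INR #|A i| * INR #|A j| by nra.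
  have t1 : (Q * D) ^ 2 <= sW * Z by nra.
  have t2 : Q * (sW * Z) <= sW * (q * Q * Xs) by nra.
  rewrite hX in t2.
  have s1 : Q * (INR #|A i| * INR #|A j|) * (Q * D) ^ 2 <= (INR #|A i| * INR #|A j|) * (Q * (sW * Z)).
    have := Rmult_le_compat_l _ _ _ (Rmult_le_pos _ _ (Rlt_le _ _ Q0) hA) t1; lra.
  have s2 := Rmult_le_compat_l _ _ _ hA t2.
  apply: (Rle_trans _ _ _ s1); apply: (Rle_trans _ _ _ s2); right; ring.
have Q3 : 0 < Q * Q * Q by apply: Rmult_lt_0_compat => //; apply: Rmult_lt_0_compat.
exact: (Rmult_le_reg_l _ _ _ Q3 main).
Qed.

End Key.

End PartG.

Section PartH.
Local Open Scope R_scope.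

Lemma num_key (F : finFieldType) (d k : nat) (B : 'rV[F]_d -> 'rV[F]_d -> F)
  (bil : is_bilinear_form B) (nd : is_nondegenerate B)
  (A : 'I_k -> {set 'rV[F]_d}) (lam : 'I_k * 'I_k -> F) (E' : {set 'I_k * 'I_k}) e :
  e \in E' -> e.1 != e.2 -> (e.2, e.1) \notin E' ->
  (forall f, f \in E' -> f.1 != f.2) -> lam e != 0%ring ->
  INR #|A e.1| * INR #|A e.2| *
   (INR #|F| * INR (num_solutions B E' lam A) - INR (num_solutions B (E' :\ e) lam A)) ^ 2
  <= INR #|F| * INR #|'rV[F]_d| *
     INR (num_solutions B [set f in E' | ~~ touches e.2 f] lam A) *
     INR (num_solutions B [set f in E' | ~~ touches e.1 f] lam A).
Proof.
move=> h1 h2 h3 h4 h5; have := key_ineq bil nd A h1 h2 h3 h4 h5.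
by rewrite /= !S_sum.
Qed.

Lemma num_empty (F : finFieldType) (d k : nat) (B : 'rV[F]_d -> 'rV[F]_d -> F)
  (A : 'I_k -> {set 'rV[F]_d}) (lam : 'I_k * 'I_k -> F) :
  num_solutions B set0 lam A = (\prod_(i < k) #|A i|)%N.
Proof.
rewrite /num_solutions.
have -> : #|[set a : {ffun 'I_k -> 'rV[F]_d} | [forall i, a i \in A i] &&
             [forall e in set0, B (a e.1) (a e.2) == lam e]]| =
          #|(finfun.family (fun i => mem (A i)) : simpl_pred _)|.
  apply: eq_card => a; rewrite inE.
  have -> : [forall e in set0, B (a e.1) (a e.2) == lam e] by apply/forall_inP => e; rewrite inE.
  rewrite andbT; apply/forallP/familyP => H i; exact: H.
by rewrite card_family foldrE big_map big_enum.
Qed.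

Lemma step_num (q C P Ai Aj D N1 N2 Q z a b g h : R) :
  0 < q -> 0 < C -> 0 <= P -> 0 < z -> 0 < a -> 0 < b -> a * b <= h -> 0 < g -> Q = g * q ->
  0 <= N1 -> N1 <= 2 * P * b / z -> 0 <= N2 -> N2 <= 2 * P * a / z ->
  C ^ 2 * (g * h) <= Ai * Aj -> Ai * Aj * D ^ 2 <= q * Q * N1 * N2 ->
  D ^ 2 <= (2 * q * (P / z) / C) ^ 2.
Proof.
move=> q0 C0 P0 z0 a0 b0 abh g0 eQ N10 N1le N20 N2le AA key.
have h0 : 0 < h by nra.
have K0 : 0 < Ai * Aj.
  apply: Rlt_le_trans AA; apply: Rmult_lt_0_compat; [nra | nra].
have t1 : N1 * N2 <= (2 * P * b / z) * (2 * P * a / z).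
  apply: Rmult_le_compat => //.
have t2 : (2 * P * b / z) * (2 * P * a / z) = 4 * P ^ 2 * (a * b) / z ^ 2.
  field; lra.
have t3 : q * Q * N1 * N2 <= q * Q * (4 * P ^ 2 * h / z ^ 2).
  rewrite Rmult_assoc; apply: Rmult_le_compat_l; first by rewrite eQ; nra.
  apply: (Rle_trans _ _ _ t1); rewrite t2.
  have z2 : 0 < z ^ 2 by nra.
  rewrite /Rdiv; apply: Rmult_le_compat_r; first by apply: Rlt_le; apply: Rinv_0_lt_compat.
  have : 0 <= P ^ 2 by nra. nra.
have t4 : q * Q * (4 * P ^ 2 * h / z ^ 2) = (2 * q * (P / z) / C) ^ 2 * (C ^ 2 * (g * h)).
  rewrite eQ; field; lra.
have t5 : Ai * Aj * D ^ 2 <= Ai * Aj * (2 * q * (P / z) / C) ^ 2.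
  apply: (Rle_trans _ _ _ key); apply: (Rle_trans _ _ _ t3); rewrite t4.
  rewrite Rmult_comm; apply: Rmult_le_compat_r => //; apply: pow2_ge_0.
exact: (Rmult_le_reg_l _ _ _ K0 t5).
Qed.

Lemma comb (q N N'' u e2 d2 : R) : 0 < q ->
  Rabs (q * N - N'') <= q * e2 -> Rabs (N'' - q * u) <= q * d2 ->
  Rabs (N - u) <= e2 + d2.
Proof.
move=> q0 h1 h2.
have : Rabs (q * N - q * u) <= q * (e2 + d2).
  have -> : q * N - q * u = (q * N - N'') + (N'' - q * u) by ring.
  apply: Rle_trans (Rabs_triang _ _) _; lra.
have -> : q * N - q * u = q * (N - u) by ring.
rewrite Rabs_mult (Rabs_right q); last lra.
move=> h; exact: (Rmult_le_reg_l _ _ _ q0 h).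
Qed.

Lemma abs_of_sq x y : 0 <= y -> x ^ 2 <= y ^ 2 -> Rabs x <= y.
Proof.
move=> y0 h; rewrite -(Rabs_right y); last lra.
apply: Rsqr_le_abs_0; rewrite /Rsqr; nra.
Qed.

Lemma card_split (T : finType) (E : {set T}) (p : pred T) :
  addn #|[set f in E | p f]| #|[set f in E | ~~ p f]| = #|E|.
Proof.
rewrite -(cardsID [set f | p f] E); congr addn; apply: eq_card => f; rewrite !inE //; by rewrite andbC.
Qed.

Lemma INR_expn m n : INR (expn m n) = INR m ^ n.
Proof. elim: n => [|n IH] //=; by rewrite expnS mult_INR IH. Qed.

Section Main.
Variables (F : finFieldType) (d k t : nat) (E : {set 'I_k * 'I_k}).
Variables (B : 'rV[F]_d -> 'rV[F]_d -> F) (A : 'I_k -> {set 'rV[F]_d}) (lam : 'I_k * 'I_k -> F).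
Variables (C R0 : R).
Hypothesis val : valid_edges E.
Hypothesis hdeg : forall i, leq (edge_deg E i) t.
Hypothesis bil : is_bilinear_form B.
Hypothesis nd : is_nondegenerate B.
Hypothesis hlam : forall e, e \in E -> lam e != 0%ring.
Hypothesis d1 : leq 1 d.
Hypothesis C0 : 0 < C.
Hypothesis CE : 2 * INR #|E| <= C.
Hypothesis R00 : 0 <= R0.
Hypothesis R0sq : R0 ^ 2 = INR #|F| ^ (subn d 1) * INR #|F| ^ (muln 2 t).
Hypothesis hA : forall i, C * R0 <= INR #|A i|.

Let q := INR #|F|.
Let P := INR (\prod_(i < k) #|A i|).
Let N E' := INR (num_solutions B E' lam A).

Lemma q_pos : 0 < q.
Proof. apply: lt_0_INR; apply/ltP; apply/card_gt0P; by exists 0%ring. Qed.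

Lemma q_ge1' : 1 <= q.
Proof. have := q_pos; rewrite /q; case: #|F| => [|n]; first by simpl; lra.
rewrite S_INR; have := pos_INR n; lra. Qed.

Lemma P_ge0 : 0 <= P. Proof. exact: pos_INR. Qed.

Lemma base_case : Rabs (N set0 - P / q ^ #|@set0 (prod 'I_k 'I_k)|) <=
   2 * INR #|@set0 (prod 'I_k 'I_k)| / C * (P / q ^ #|@set0 (prod 'I_k 'I_k)|).
Proof.
rewrite /N num_empty cards0 /= -/P.
have -> : P - P / 1 = 0 by field.
rewrite Rabs_R0; right; field; lra.
Qed.

Lemma main_bound : forall E' : {set prod 'I_k 'I_k}, E' \subset E ->
  Rabs (N E' - P / q ^ #|E'|) <= 2 * INR #|E'| / C * (P / q ^ #|E'|).
Proof.
move=> E' sub; move: {2}#|E'| (leqnn #|E'|) => m hm.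
elim: m E' sub hm => [|m IH] E' sub hm.
  have : #|E'| == O by rewrite -leqn0.
  by rewrite cards_eq0 => /eqP ->; exact: base_case.
case: (set_0Vmem E') => [->|[e eE']]; first exact: base_case.
have eE : e \in E by apply: (subsetP sub).
have [ne12 n21E] := val eE.
have n21 : (e.2, e.1) \notin E' by apply: contra n21E; apply: (subsetP sub).
have loop : forall f, f \in E' -> f.1 != f.2.
  by move=> f fE; have [] := val (subsetP sub _ fE).
have nl := hlam eE.
have key := num_key bil nd A eE' ne12 n21 loop nl.
set E1 := [set f in E' | ~~ touches e.2 f] in key.
set E2 := [set f in E' | ~~ touches e.1 f] in key.
set l := #|E'|.
set di := #|[set f in E' | touches e.1 f]|.
set dj := #|[set f in E' | touches e.2 f]|.
have cE2 : addn di #|E2| = l by apply: card_split.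
have cE1 : addn dj #|E1| = l by apply: card_split.
have di1 : leq 1 di.
  by apply/card_gt0P; exists e; rewrite inE eE' /touches eqxx.
have dj1 : leq 1 dj.
  by apply/card_gt0P; exists e; rewrite inE eE' /touches eqxx orbT.
have dit : leq di t.
  apply: leq_trans (hdeg e.1); apply: subset_leq_card; apply/subsetP => f.
  by rewrite !inE => /andP [fE tf]; rewrite (subsetP sub _ fE).
have djt : leq dj t.
  apply: leq_trans (hdeg e.2); apply: subset_leq_card; apply/subsetP => f.
  by rewrite !inE => /andP [fE tf]; rewrite (subsetP sub _ fE).
have cE'' : #|E' :\ e| = l.-1 by rewrite /l (cardsD1 e E') eE'.
have l1 : leq 1 l by apply/card_gt0P; exists e.
have sub1 : E1 \subset E.
  by apply: subset_trans sub; apply/subsetP => f; rewrite inE => /andP [].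
have sub2 : E2 \subset E.
  by apply: subset_trans sub; apply/subsetP => f; rewrite inE => /andP [].
have sub'' : (E' :\ e) \subset E.
  by apply: subset_trans sub; apply/subsetP => f; rewrite inE => /andP [].
have hE1 : leq #|E1| m.
  by rewrite -ltnS; apply: leq_trans hm; rewrite -/l -cE1 addnC -{1}(addn0 #|E1|) ltn_add2l.
have hE2 : leq #|E2| m.
  by rewrite -ltnS; apply: leq_trans hm; rewrite -/l -cE2 addnC -{1}(addn0 #|E2|) ltn_add2l.
have hE'' : leq #|E' :\ e| m.
  by rewrite cE'' -ltnS; apply: leq_trans hm; rewrite prednK.
have IH1 := IH E1 sub1 hE1.
have IH2 := IH E2 sub2 hE2.
have IH'' := IH _ sub'' hE''.
have q0 := q_pos; have q1 := q_ge1'; have P0 := P_ge0.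
have small : forall X : {set prod 'I_k 'I_k}, X \subset E ->
   Rabs (N X - P / q ^ #|X|) <= 2 * INR #|X| / C * (P / q ^ #|X|) ->
   N X <= 2 * (P / q ^ #|X|).
  move=> X sX h.
  have hX : 2 * INR #|X| / C <= 1.
    have : INR #|X| <= INR #|E| by apply: le_INR; apply/leP; apply: subset_leq_card.
    move=> h'; apply: (Rmult_le_reg_r C) => //; field_simplify; lra.
  have M0 : 0 <= P / q ^ #|X|.
    by apply: Rmult_le_pos => //; apply: Rlt_le; apply: Rinv_0_lt_compat; apply: pow_lt.
  have := Rle_abs (N X - P / q ^ #|X|).
  have : 2 * INR #|X| / C * (P / q ^ #|X|) <= P / q ^ #|X|.
    by have := Rmult_le_compat_r _ _ _ M0 hX; lra.
  lra.
have N1le := small _ sub1 IH1.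
have N2le := small _ sub2 IH2.
have qpow : forall n, 0 < q ^ n by move=> n; apply: pow_lt.
have eq1 : P / q ^ #|E1| = P * q ^ dj / q ^ l.
  rewrite -cE1 pow_add; field; split; apply: Rgt_not_eq; apply: qpow.
have eq2 : P / q ^ #|E2| = P * q ^ di / q ^ l.
  rewrite -cE2 pow_add; field; split; apply: Rgt_not_eq; apply: qpow.
have hQ : INR #|'rV[F]_d| = q ^ (subn d 1) * q.
  rewrite card_mx mul1n INR_expn -/q -{1}(subnK d1) pow_add /=; ring.
have hab : q ^ di * q ^ dj <= q ^ (muln 2 t).
  rewrite -pow_add; apply: Rle_pow => //; apply/leP.
  by rewrite mul2n -addnn leq_add.
have hAA : C ^ 2 * (q ^ (subn d 1) * q ^ (muln 2 t)) <= INR #|A e.1| * INR #|A e.2|.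
  rewrite -R0sq.
  have := hA e.1; have := hA e.2; have : 0 <= C * R0 by nra.
  nra.
have N10 : 0 <= N E1 by apply: pos_INR.
have N20 : 0 <= N E2 by apply: pos_INR.
have N1le' : N E1 <= 2 * P * q ^ dj / q ^ l.
  have -> : 2 * P * q ^ dj / q ^ l = 2 * (P / q ^ #|E1|).
    rewrite eq1 /Rdiv; ring.
  exact: N1le.
have N2le' : N E2 <= 2 * P * q ^ di / q ^ l.
  have -> : 2 * P * q ^ di / q ^ l = 2 * (P / q ^ #|E2|).
    rewrite eq2 /Rdiv; ring.
  exact: N2le.
have hstep := step_num q0 C0 P0 (qpow l) (qpow di) (qpow dj) hab (qpow _) hQ N10 N1le' N20 N2le' hAA key.
have hD : Rabs (q * N E' - N (E' :\ e)) <= q * (2 * (P / q ^ l) / C).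
  apply: abs_of_sq.
    apply: Rmult_le_pos; first lra.
    apply: Rmult_le_pos; last by apply: Rlt_le; apply: Rinv_0_lt_compat.
    apply: Rmult_le_pos; first lra.
    by apply: Rmult_le_pos => //; apply: Rlt_le; apply: Rinv_0_lt_compat.
  have -> : q * (2 * (P / q ^ l) / C) = 2 * q * (P / q ^ l) / C by rewrite /Rdiv; ring.
  exact: hstep.
have hl : q ^ l = q ^ l.-1 * q.
  by rewrite -{1}(prednK l1) -tech_pow_Rmult Rmult_comm.
rewrite cE'' in IH''.
have hM : P / q ^ l.-1 = q * (P / q ^ l).
  rewrite hl; field; split; apply: Rgt_not_eq; first [exact: q0 | apply: qpow].
rewrite hM in IH''.
have := comb q0 hD (ltac:(rewrite -Rmult_assoc [_ * q]Rmult_comm Rmult_assoc in IH''; exact: IH'')).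
have -> : INR l = INR l.-1 + 1 by rewrite -S_INR prednK.
move=> h; apply: (Rle_trans _ _ _ h); right; rewrite /Rdiv; ring.
Qed.
End Main.

End PartH.

Unset Implicit Arguments.

Theorem theorem1p1 (d k t : nat) (E : {set 'I_k * 'I_k}) :
  (1 <= d)%N -> (2 <= k)%N -> (1 <= t)%N -> (t <= k - 1)%N ->
  valid_edges E ->
  (forall i : 'I_k, (edge_deg E i <= t)%N) ->
  forall eps : R, (0 < eps)%R ->
  exists C : R, (0 < C)%R /\
    forall (F : finFieldType) (B : 'rV[F]_d -> 'rV[F]_d -> F)
           (A : 'I_k -> {set 'rV[F]_d}) (lam : 'I_k * 'I_k -> F),
      is_bilinear_form B -> is_nondegenerate B ->
      (forall i, (C * Rpower (INR #|F|) ((INR d - 1) / 2 + INR t)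
                   <= INR #|A i|)%R) ->
      (forall e, e \in E -> lam e != GRing.zero) ->
      (Rabs (INR (num_solutions B E lam A)
             - INR (\prod_(i < k) #|A i|) / INR #|F| ^ #|E|)
       <= eps * (INR (\prod_(i < k) #|A i|) / INR #|F| ^ #|E|))%R.
Proof.
move=> d1 k2 t1 tk val hdeg eps eps0.
Local Open Scope R_scope.
set L := INR #|E|.
have L0 : 0 <= L by apply: pos_INR.
set mu := Rmin eps 1.
have mu0 : 0 < mu by apply: Rmin_pos; lra.
have mu1 : mu <= 1 by apply: Rmin_r.
have mue : mu <= eps by apply: Rmin_l.
exists (2 * (L + 1) / mu); split.
  apply: Rmult_lt_0_compat; first lra.
  by apply: Rinv_0_lt_compat.
move=> F B A lam bil nd hA hlam.
set C := 2 * (L + 1) / mu.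
have C0 : 0 < C by apply: Rmult_lt_0_compat; [lra | apply: Rinv_0_lt_compat].
have CE : 2 * INR #|E| <= C.
  rewrite /C -/L; apply: (Rmult_le_reg_r mu) => //; field_simplify; [nra | lra].
set x := (INR d - 1) / 2 + INR t.
set R0 := Rpower (INR #|F|) x.
have q0 : 0 < INR #|F|.
  apply: lt_0_INR; apply/ltP; apply/card_gt0P; by exists GRing.zero.
have R00 : 0 <= R0 by apply: Rlt_le; apply: exp_pos.
have R0sq : R0 ^ 2 = INR #|F| ^ (subn d 1) * INR #|F| ^ (muln 2 t).
  rewrite /= Rmult_1_r /R0 -Rpower_plus.
  have -> : x + x = INR (subn d 1) + INR (muln 2 t).
    rewrite /x minus_INR; last by apply/leP.
    rewrite mult_INR /=; field.
  by rewrite Rpower_plus !Rpower_pow.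
have := main_bound val hdeg bil nd hlam d1 C0 CE R00 R0sq hA (subxx E).
set M := INR (\prod_(i < k) #|A i|) / INR #|F| ^ #|E|.
have M0 : 0 <= M.
  apply: Rmult_le_pos; first exact: pos_INR.
  by apply: Rlt_le; apply: Rinv_0_lt_compat; apply: pow_lt.
move=> h; apply: (Rle_trans _ _ _ h); apply: Rmult_le_compat_r => //.
rewrite -/L /C; apply: (Rle_trans _ mu) => //.
have -> : 2 * L / (2 * (L + 1) / mu) = L / (L + 1) * mu by field; lra.
have : L / (L + 1) <= 1.
  apply: (Rmult_le_reg_r (L + 1)); first lra.
  rewrite /Rdiv Rmult_assoc Rinv_l; lra.
nra.
Qed.
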